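(* In the transfer model and with the freeze algorithm $\mathrm{CalcFreeze}$ described in the context, suppose the transaction graph $G$ is acyclic and that no burn transactions occur between the disputed transaction $t_0$ and the freeze time. Then when the algorithm terminates, every edge $t=(a\to b)$ of $G$ satisfies $$ \mathrm{ob}(b,t)\le \mathrm{obsum}(a,t). $$ That is, the obligation passed to $b$ because of $t$ does not exceed the obligations passed to $a$ through transactions into $a$ that occurred before $t$.
   Context: Transfer model. There is a finite set of addresses, each holding a nonnegative token balance. A transaction is a transfer $t=(a\to b)$ of value $\mathrm{val}(t)\ge 0$ from address $a$ to address $b$; it decreases the balance of $a$ by $\mathrm{val}(t)$ and increases the balance of $b$ by $\mathrm{val}(t)$. Transactions are totally ordered in time, and each transaction is valid: the sender's balance never becomes negative. There are no burns, i.e. no operation removes tokens from an address other than a transfer. The disputed transaction is $t_0=(v\to a_0)$ with $s=\mathrm{val}(t_0)$. The freeze happens at a time after $t_0$ and after all transactions considered. For an address $a$, $\mathrm{Bal}(a)$ denotes its balance at the freeze time; no amounts are frozen before this freeze. Transaction graph $G$. Consider the transactions strictly after $t_0$ and before the freeze. $G$ is the directed multigraph whose edges are those transactions $(b\to c)$ for which there is a directed path of such transactions from $a_0$ to $b$ ($b=a_0$ allowed). The vertices are $a_0$ and all endpoints of these edges. Each edge keeps its time and its value $\mathrm{val}$. Algorithm $\mathrm{CalcFreeze}$ (on acyclic $G$): - Let $L$ be a topological order of the vertices of $G$, i.e. for every edge $a\to b$, $a$ precedes $b$. - Initialize $\mathrm{oblig}(a)=0$ for all $a\neq a_0$ and $\mathrm{oblig}(a_0)=s$.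 - For each $a$ in the order $L$: - Set $\tau=\mathrm{oblig}(a)$, $\mathrm{toFreeze}(a)=\min(\tau,\mathrm{Bal}(a))$ and $\tau'=\tau-\mathrm{toFreeze}(a)$. - If $\tau'\le 0$, proceed to the next vertex. - Otherwise, iterate over the outgoing edges $t=(a\to b)$ of $a$ in $G$ in reverse chronological order (most recent first). For each such edge set $\mathrm{ob}(b,t)=\min(\tau',\mathrm{val}(t))$, add $\mathrm{ob}(b,t)$ to $\mathrm{oblig}(b)$, and subtract $\mathrm{ob}(b,t)$ from $\tau'$. Stop iterating over the edges of $a$ as soon as $\tau'\le 0$. - Edges never processed have $\mathrm{ob}(b,t)=0$. Definition of $\mathrm{obsum}$. Set $\mathrm{ob}(a_0,t_0)=s$. For an edge $t=(a\to b)$ of $G$, $\mathrm{obsum}(a,t)$ is the sum of $\mathrm{ob}(a,t')$ over all transactions $t'$ into $a$ that occurred before $t$, where $t'$ ranges over the edges of $G$ with destination $a$ together with $t_0$ if $a=a_0$. *)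

(* Defs.v *)
From mathcomp Require Import all_boot all_order all_algebra.
Set Implicit Arguments. Unset Strict Implicit. Unset Printing Implicit Defensive.
Import Order.TTheory GRing.Theory Num.Theory.
Local Open Scope ring_scope.

(* A finite transaction history: transactions are indexed by time 0..n-1
   (index order = chronological order).  The freeze happens at time n, i.e. after
   all transactions of the history.  Tokens only move through transfers
   (no burns, no mints): balances are computed from transfers only. *)
Record history (A : finType) (R : realFieldType) := History {
  n_tx : nat;
  src : nat -> A;
  dst : nat -> A;
  amt : nat -> R;
  init : A -> R }.

Section Model.
Variables (A : finType) (R : realFieldType) (h : history A R).

Local Notation n := (n_tx h).
Local Notation src := (src h).
Local Notation dst := (dst h).
Local Notation amt := (amt h).

Definition apply_tx (b : A -> R) (i : nat) : A -> R :=
  fun x => b x - (if x == src i then amt i else 0)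
               + (if x == dst i then amt i else 0).

(* balances just before transaction k (i.e. after transactions 0..k-1) *)
Definition bal_at (k : nat) : A -> R := foldl apply_tx (init h) (iota 0 k).

Definition Bal : A -> R := bal_at n.

Definition valid_history : Prop :=
  [/\ forall i, (i < n)%N -> 0 <= amt i,
      forall x, 0 <= init h x
    & forall i, (i < n)%N -> amt i <= bal_at i (src i)].

Variable i0 : nat.

Definition a0 : A := dst i0.
Definition s : R := amt i0.

Definition trel : rel A :=
  fun x y => has (fun i => [&& (i0 < i)%N, src i == x & dst i == y]) (iota 0 n).

Definition inG (i : nat) : bool :=
  [&& (i0 < i)%N, (i < n)%N & connect trel a0 (src i)].

Definition Grel : rel A :=
  fun x y => has (fun i => [&& inG i, src i == x & dst i == y]) (iota 0 n).

Definition isVertex (x : A) : bool :=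
  (x == a0) || has (fun i => inG i && ((src i == x) || (dst i == x))) (iota 0 n).

Definition G_acyclic : Prop :=
  forall i, inG i -> ~~ connect Grel (dst i) (src i).

Definition topo_order (L : seq A) : Prop :=
  [/\ uniq L,
      forall x, (x \in L) = isVertex x
    & forall i, inG i -> (index (src i) L < index (dst i) L)%N].

(* state: (oblig, ob) where ob is indexed by the edge (transaction index) *)

Definition out_edges (a : A) : seq nat :=
  rev [seq i <- iota 0 n | inG i && (src i == a)].

Definition step_edge (p : (A -> R) * (nat -> R) * R) (t : nat)
  : (A -> R) * (nat -> R) * R :=
  let: (obl, o, tau) := p in
  if tau <= 0 then p (* stop iterating *)
  else
    let x := Num.min tau (amt t) in
    ((fun y => if y == dst t then obl y + x else obl y),
     (fun j => if j == t then x else o j),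
     tau - x).

Definition process (st : (A -> R) * (nat -> R)) (a : A) : (A -> R) * (nat -> R) :=
  let: (obl, o) := st in
  let tau := obl a in
  let toFreeze := Num.min tau (Bal a) in
  let tau' := tau - toFreeze in
  if tau' <= 0 then st
  else let: (obl', o', _) := foldl step_edge (obl, o, tau') (out_edges a) in
       (obl', o').

Definition calc_freeze (L : seq A) : (A -> R) * (nat -> R) :=
  foldl process ((fun y => if y == a0 then s else 0), (fun _ => 0)) L.

(* final obligations ob(b,t) of the edges (0 for unprocessed edges) *)
Definition ob_final (L : seq A) : nat -> R := (calc_freeze L).2.

(* obsum(a,t) for an edge t = (a -> b): the obligations on the edges of G
   into a that occurred before t, plus ob(a0,t0) = s when a = a0 *)
Definition obsum (o : nat -> R) (t : nat) : R :=
  (if src t == a0 then s else 0)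
  + \sum_(j <- iota 0 n | [&& inG j, dst j == src t & (j < t)%N]) o j.

End Model.

(* Main.v *)
Require Import Defs.
From mathcomp Require Import all_boot all_order all_algebra.
From mathcomp Require Import ring lra.
Import Order.TTheory GRing.Theory Num.Theory.
Local Open Scope ring_scope.

Section Proof.
Variables (A : finType) (R : realFieldType) (h : history A R) (i0 : nat).
Local Notation n := (n_tx h).
Local Notation amt := (amt h).
Local Notation src := (src h).
Local Notation dst := (dst h).
Local Notation step := (step_edge h).

Lemma fold_o_notin l p j : j \notin l ->
  (foldl step p l).1.2 j = p.1.2 j.
Proof.
elim: l p => [|x l IH] [[obl o] tau] //=.
rewrite in_cons negb_or => /andP[jx jl].
rewrite IH //=; case: ifP => //= _.
by rewrite (negbTE jx).
Qed.

Definition okO (o : nat -> R) := forall j, 0 <= o j /\ (o j <= amt j \/ o j = 0).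

Lemma fold_okO l p :
  (forall j, j \in l -> 0 <= amt j) -> okO p.1.2 -> okO (foldl step p l).1.2.
Proof.
elim: l p => [|x l IH] [[obl o] tau] //= Ha Ho.
apply: IH; first by move=> j jl; apply: Ha; rewrite in_cons jl orbT.
case: ifP => //= tau0 j.
case: eqP => [->|_]; last exact: Ho.
have ax : 0 <= amt x by apply: Ha; rewrite in_cons eqxx.
have tp : 0 < tau by rewrite ltNge tau0.
split; first by rewrite le_min ax (ltW tp).
by left; rewrite ge_min lexx orbT.
Qed.

Lemma maxmono (a b S : R) : 0 <= S -> a <= b -> Num.max 0 (a - S) <= Num.max 0 b.
Proof.
move=> S0 ab; rewrite ge_max !le_max lexx /=.
have -> : a - S <= b by lra.
by rewrite orbT.
Qed.

Lemma fold_bound l obl o tau t :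
  sorted (fun x y => y < x)%N l -> uniq l -> t \in l -> o t = 0 ->
  (forall j, j \in l -> 0 <= amt j) ->
  (foldl step (obl, o, tau) l).1.2 t <=
     Num.max 0 (tau - \sum_(j <- l | (t < j)%N) amt j).
Proof.
elim: l obl o tau => [|x l IH] obl o tau //= Hs /andP[xl ul] tl ot Ha.
have Hall : all (fun y => (y < x)%N) l.
  by apply: (order_path_min _ Hs) => a b c /= H1 H2; apply: ltn_trans H2 H1.
have Hs' : sorted (fun x y => y < x)%N l by apply: path_sorted Hs.
have Ha' : forall j, j \in l -> 0 <= amt j by move=> j jl; apply: Ha; rewrite in_cons jl orbT.
have S0 : forall l' t', (forall j, j \in l' -> 0 <= amt j) ->
    0 <= \sum_(j <- l' | (t' < j)%N) amt j.
  by move=> l' t' H; rewrite big_seq_cond; apply: sumr_ge0 => i /andP[/H].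
rewrite big_cons.
case: (eqVneq t x) tl => [tx _|tx tl].
  subst t.
  have -> : \sum_(j <- l | (x < j)%N) amt j = 0.
    rewrite big_seq_cond big1 // => j /andP[jl tj].
    by move/allP: Hall => /(_ _ jl) /(ltn_trans tj); rewrite ltnn.
  rewrite ltnn fold_o_notin //= subr0.
  case: ifP => /= [tau0|tau0]; first by rewrite ot le_max lexx.
  rewrite eqxx le_max; apply/orP; right; rewrite ge_min lexx //.
have {}tl : t \in l by move: tl; rewrite in_cons (negbTE tx).
have xt : (t < x)%N by move/allP: Hall => /(_ _ tl).
rewrite xt.
case: ifP => /= tau0.
  apply: le_trans (IH _ _ _ Hs' ul tl ot Ha') _.
  have h1 : Num.max 0 (tau - \sum_(j <- l | (t < j)%N) amt j) = 0.
    by apply/max_idPl; have := S0 l t Ha'; lra.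
  rewrite h1 le_max lexx //.
apply: le_trans (IH _ _ _ Hs' ul tl _ Ha') _; first by rewrite (negbTE tx).
have ax : 0 <= amt x by apply: Ha; rewrite in_cons eqxx.
have := S0 l t Ha'; set S := \sum_(j <- l | _) _ => HS.
case: (lerP tau (amt x)) => Hm.
  rewrite le_max; apply/orP; left.
  by rewrite ge_max lexx /=; lra.
by rewrite opprD addrA.
Qed.

Local Notation inG := (inG h i0).
Local Notation process := (process h i0).
Local Notation out_edges := (out_edges h i0).

Definition inv (obl : A -> R) (o : nat -> R) := forall v,
  obl v = (if v == a0 h i0 then s h i0 else 0) +
          \sum_(j <- iota 0 n | inG j && (dst j == v)) o j.

Lemma inG_lt j : inG j -> (j < n)%N.
Proof. by case/and3P. Qed.

Lemma sum_pick (P : pred nat) (m : R) x : (x < n)%N ->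
  \sum_(j <- iota 0 n | P j) (if j == x then m else 0) = if P x then m else 0.
Proof.
move=> xn; rewrite big_mkcond (bigD1_seq x) ?iota_uniq ?mem_iota //= eqxx.
rewrite big1 ?addr0 // => j /negbTE ->; by case: ifP.
Qed.

Lemma fold_inv l obl o tau : uniq l ->
  (forall j, j \in l -> inG j /\ o j = 0) -> inv obl o ->
  inv (foldl step (obl, o, tau) l).1.1 (foldl step (obl, o, tau) l).1.2.
Proof.
elim: l obl o tau => [|x l IH] obl o tau //= /andP[xl ul] Hl Hinv.
have [Gx ox] := Hl x (mem_head _ _).
case: ifP => tau0.
  by apply: IH => // j jl; apply: Hl; rewrite in_cons jl orbT.
apply: IH => //.
  move=> j jl; have [Gj oj] : inG j /\ o j = 0 by apply: Hl; rewrite in_cons jl orbT.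
  split => //; case: eqP => // ejx; by rewrite -ejx jl in xl.
move=> v; rewrite Hinv.
have -> : \sum_(j <- iota 0 n | inG j && (dst j == v))
            (if j == x then Num.min tau (amt x) else o j) =
          \sum_(j <- iota 0 n | inG j && (dst j == v))
            (o j + (if j == x then Num.min tau (amt x) else 0)).
  by apply: eq_bigr => j _; case: eqP => [->|]; rewrite ?ox ?add0r ?addr0.
rewrite big_split /= sum_pick ?inG_lt // Gx /= (eq_sym (dst x)).
case: eqP => _; by rewrite ?addr0 ?addrA.
Qed.

Lemma out_edgesP j v : (j \in out_edges v) = inG j && (src j == v).
Proof.
rewrite /out_edges mem_rev mem_filter mem_iota /= add0n.
by case G: (inG j) => //=; rewrite (inG_lt _ G) andbT.
Qed.

Lemma out_edges_uniq v : uniq (out_edges v).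
Proof. by rewrite rev_uniq filter_uniq // iota_uniq. Qed.

Lemma out_edges_sorted v : sorted (fun x y => y < x)%N (out_edges v).
Proof.
rewrite rev_sorted; apply: sorted_filter; first exact: ltn_trans.
exact: iota_ltn_sorted.
Qed.

Lemma process_o_notin st v j : src j != v -> (process st v).2 j = st.2 j.
Proof.
case: st => obl o sv; rewrite /process; case: ifP => // _.
case E: foldl => [[obl' o'] tau'] /=.
have := fold_o_notin (out_edges v) (obl, o, obl v - Num.min (obl v) (Bal h v)) j.
rewrite E /= => -> //; by rewrite out_edgesP negb_and sv orbT.
Qed.

Lemma foldP_o_notin l st j : src j \notin l -> (foldl process st l).2 j = st.2 j.
Proof.
elim: l st => [|x l IH] st //=; rewrite in_cons negb_or => /andP[sx sl].
by rewrite IH // process_o_notin.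
Qed.

Hypothesis Hv : valid_history h.

Lemma amt_ge0 j : (j < n)%N -> 0 <= amt j.
Proof. by case: Hv => H _ _; apply: H. Qed.

Lemma process_okO st v : okO st.2 -> okO (process st v).2.
Proof.
case: st => obl o; rewrite /process; case: ifP => // _ Ho.
case E: foldl => [[obl' o'] tau'] /=.
have := fold_okO (out_edges v) (obl, o, obl v - Num.min (obl v) (Bal h v)).
rewrite E /=; apply => // j; rewrite out_edgesP => /andP[/inG_lt ? _].
exact: amt_ge0.
Qed.

Lemma foldP_okO l st : okO st.2 -> okO (foldl process st l).2.
Proof. by elim: l st => [|x l IH] st //= Ho; apply/IH/process_okO. Qed.

Lemma process_inv st v : (forall j, j \in out_edges v -> st.2 j = 0) ->
  inv st.1 st.2 -> inv (process st v).1 (process st v).2.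
Proof.
case: st => obl o /= H0; rewrite /process; case: ifP => // _ Hi.
case E: foldl => [[obl' o'] tau'] /=.
have := fold_inv (out_edges v) obl o (obl v - Num.min (obl v) (Bal h v)).
rewrite E /=; apply => //; first exact: out_edges_uniq.
move=> j jv; split; last exact: H0.
by move: jv; rewrite out_edgesP => /andP[].
Qed.

Lemma foldP_inv l st : uniq l -> inv st.1 st.2 ->
  (forall j, inG j -> src j \in l -> st.2 j = 0) ->
  inv (foldl process st l).1 (foldl process st l).2.
Proof.
elim: l st => [|x l IH] st //= /andP[xl ul] Hi H0.
apply: IH => //.
  apply: process_inv => // j; rewrite out_edgesP => /andP[G /eqP sj].
  by apply: H0; rewrite // sj mem_head.
move=> j G sl; rewrite process_o_notin; first by apply: H0; rewrite // in_cons sl orbT.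
by apply: contraNneq xl => <-.
Qed.

Lemma process_bound st a t : inG t -> src t = a -> st.2 t = 0 ->
  (process st a).2 t <= Num.max 0 (st.1 a - Num.min (st.1 a) (Bal h a)
        - \sum_(j <- out_edges a | (t < j)%N) amt j).
Proof.
case: st => obl o /= Gt sa ot; rewrite /process; case: ifP => /= [_|_].
  by rewrite ot le_max lexx.
case E: foldl => [[obl' o'] tau'] /=.
have := fold_bound (out_edges a) obl o (obl a - Num.min (obl a) (Bal h a)) t.
rewrite E /=; apply => //.
- exact: out_edges_sorted.
- exact: out_edges_uniq.
- by rewrite out_edgesP Gt sa eqxx.
- by move=> j; rewrite out_edgesP => /andP[/inG_lt ? _]; exact: amt_ge0.
Qed.

Definition delta j x := (if x == dst j then amt j else 0) - (if x == src j then amt j else 0).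

Lemma bal_atS k : bal_at h k.+1 = apply_tx h (bal_at h k) k.
Proof. by rewrite /bal_at -addn1 iotaD foldl_cat. Qed.

Lemma bal_atE k x : bal_at h k x = init h x + \sum_(j <- iota 0 k) delta j x.
Proof.
elim: k => [|k IH]; first by rewrite /bal_at /= big_nil addr0.
rewrite bal_atS /apply_tx IH -addn1 iotaD big_cat big_seq1 /= /delta.
rewrite add0n; ring.
Qed.

Lemma bal_ge0 k x : (k <= n)%N -> 0 <= bal_at h k x.
Proof.
case: Hv => Ha Hi Hb.
elim: k => [|k IH] kn; first by rewrite /bal_at /=.
have := IH (ltnW kn); have := Ha k kn; have := Hb k kn.
rewrite bal_atS /apply_tx.
case: eqP => [->|_]; case: eqP => [->|_]; lra.
Qed.

Lemma key t o : inG t -> o t = 0 -> okO o ->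
  \sum_(j <- iota 0 n | (inG j && (dst j == src t)) && ~~ (j < t)%N) o j
   <= Bal h (src t) + \sum_(j <- out_edges (src t) | (t < j)%N) amt j.
Proof.
move=> Gt ot Ho; set a := src t.
have tn := inG_lt _ Gt.
set D := \sum_(j <- iota 0 n) (if (t < j)%N && (dst j == a) then amt j else 0).
have D1 : \sum_(j <- iota 0 n | (inG j && (dst j == a)) && ~~ (j < t)%N) o j <= D.
  rewrite big_mkcond /D big_seq [X in _ <= X]big_seq; apply: ler_sum => j.
  rewrite mem_iota /= add0n => jn.
  have R0 : 0 <= (if (t < j)%N && (dst j == a) then amt j else 0).
    by case: ifP => _ //; exact: amt_ge0.
  case: ifP => [/andP[/andP[Gj dj]]|_ //].
  rewrite -leqNgt leq_eqVlt => /orP[/eqP tj|tj].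
    by rewrite -{1}tj ot.
  rewrite tj dj /=.
  by have [o0 [H|->]] := Ho j => //; exact: amt_ge0.
have D2 : \sum_(j <- out_edges a | (t < j)%N) amt j =
    \sum_(j <- iota 0 n) (if (t < j)%N && (src j == a) then amt j else 0).
  rewrite /out_edges big_rev big_filter_cond big_mkcond.
  apply: eq_big_seq => j; rewrite mem_iota /= add0n => jn.
  case tj: (t < j)%N; case sj: (src j == a); rewrite ?andbF ?andbT ?andbF //=.
  suff -> : inG j by [].
  case/and3P: Gt => it _ ct.
  by rewrite /inG (ltn_trans it tj) jn (eqP sj).
have D3 := bal_atE n a.
have D4 : bal_at h t.+1 a = init h a +
     \sum_(j <- iota 0 n) (if (j <= t)%N then delta j a else 0).
  rewrite bal_atE.
  have -> : iota 0 n = iota 0 t.+1 ++ iota t.+1 (n - t.+1) by rewrite -iotaD subnKC.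
  rewrite big_cat [X in _ = _ + (_ + X)]big1_seq ?addr0.
    congr (_ + _); apply: eq_big_seq => j; rewrite mem_iota /= add0n ltnS => ->.
    by [].
  by move=> j /andP[_]; rewrite mem_iota => /andP[]; rewrite ltnNge => /negbTE ->.
have D5 := bal_ge0 t.+1 a tn.
have E : \sum_(j <- iota 0 n) delta j a +
   \sum_(j <- iota 0 n) (if (t < j)%N && (src j == a) then amt j else 0) =
   \sum_(j <- iota 0 n) (if (j <= t)%N then delta j a else 0) + D.
  rewrite -!big_split; apply: eq_bigr => j _ /=.
  case: (leqP j t) => _ /=; first by rewrite !addr0.
  rewrite /delta (eq_sym a) (eq_sym a).
  case: (src j == a); case: (dst j == a); rewrite /=; ring.
rewrite /Bal D2.
have HD : 0 <= D.
  rewrite /D big_seq; apply: sumr_ge0 => j; rewrite mem_iota /= add0n => jn.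
  by case: ifP => // _; exact: amt_ge0.
lra.
Qed.

Lemma main (L : seq A) : (i0 < n)%N -> topo_order h i0 L ->
  forall t, inG t -> ob_final h i0 L t <= obsum h i0 (ob_final h i0 L) t.
Proof.
move=> Hi0 [uL memL topo] t Gt.
have aL : src t \in L.
  rewrite memL /isVertex; apply/orP; right; apply/hasP; exists t.
    by rewrite mem_iota /= add0n (inG_lt _ Gt).
  by rewrite Gt eqxx.
rewrite /obsum.
set a := src t in aL topo *.
case/splitPr: aL uL memL topo => L1 L2 uL _ topo.
move: uL; rewrite cat_uniq => /and3P[uL1 disj]; rewrite /= => /andP[aL2 uL2].
have aL1 : a \notin L1 by apply: contra disj => H; apply/hasP; exists a; rewrite ?mem_head.
set init0 := ((fun y => if y == a0 h i0 then s h i0 else 0), (fun _ : nat => 0 : R)).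
have E : ob_final h i0 (L1 ++ a :: L2) =
   (foldl process (process (foldl process init0 L1) a) L2).2.
  by rewrite /ob_final /calc_freeze foldl_cat.
rewrite E.
set st1 := foldl process init0 L1.
set st2 := process st1 a.
have ot1 : st1.2 t = 0 by rewrite /st1 foldP_o_notin.
have Hot : (foldl process st2 L2).2 t = st2.2 t by rewrite foldP_o_notin.
have Hin : forall j, inG j -> dst j = a -> (foldl process st2 L2).2 j = st1.2 j.
  move=> j Gj dj; have := topo j Gj; rewrite dj (index_pivot L2 aL1).
  rewrite index_cat; case: ifP => [jL1 _|_]; last by rewrite ltnNge leq_addr.
  have nj : src j \notin a :: L2.
    by apply: contra disj => H; apply/hasP; exists (src j).
  move: nj; rewrite in_cons negb_or => /andP[ja jL2].
  by rewrite foldP_o_notin // process_o_notin.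
have inv1 : inv st1.1 st1.2.
  apply: foldP_inv => //.
  by move=> v /=; rewrite big1 ?addr0.
have ok1 : okO st1.2 by apply: foldP_okO => j /=; split => //; right.
have B := process_bound st1 a t Gt erefl ot1.
rewrite Hot.
have -> : \sum_(j <- iota 0 n | [&& inG j, dst j == a & (j < t)%N])
            (foldl process st2 L2).2 j =
          \sum_(j <- iota 0 n | (inG j && (dst j == a)) && (j < t)%N) st1.2 j.
  rewrite (eq_bigl (fun j => (inG j && (dst j == a)) && (j < t)%N)); last by move=> j; rewrite andbA.
  by apply: eq_bigr => j /andP[/andP[Gj /eqP dj] _]; exact: Hin.
have K := key t st1.2 Gt ot1 ok1.
have Hinv := inv1 a.
rewrite (bigID (fun j => (j < t)%N)) /= in Hinv.
set I := (if a == a0 h i0 then s h i0 else 0) in Hinv *.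
have I0 : 0 <= I.
  rewrite /I; case: ifP => // _; rewrite /s; exact: amt_ge0.
set Slt := \sum_(j <- iota 0 n | _ && (j < t)%N) st1.2 j in Hinv *.
have S0 : 0 <= Slt by apply: sumr_ge0 => j _; have [] := ok1 j.
have SP0 : 0 <= \sum_(j <- out_edges a | (t < j)%N) amt j.
  rewrite big_seq_cond; apply: sumr_ge0 => j /andP[]; rewrite out_edgesP => /andP[/inG_lt ? _] _.
  exact: amt_ge0.
apply: le_trans B _.
set T := st1.1 a in Hinv *.
case: (lerP T (Bal h a)) => Hm; rewrite ge_max; apply/andP; split; lra.
Qed.
End Proof.

Theorem theoremA2 (A : finType) (R : realFieldType) (h : history A R)
    (i0 : nat) (L : seq A) :
  (i0 < n_tx h)%N ->
  valid_history h ->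
  G_acyclic h i0 ->
  topo_order h i0 L ->
  forall t, inG h i0 t ->
    ob_final h i0 L t <= obsum h i0 (ob_final h i0 L) t.
Proof.
move=> Hi0 Hv _ HL t Gt.
exact: (@main A R h i0 Hv L Hi0 HL t Gt).
Qed.
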